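(* Let $d\ge1$, $m=2^d$, $r\ge2$, $t=\lceil\log_2 r\rceil$, let $p$ be a prime with $p>d$, let $c\in\{0,\dots,r-1\}^m$, $\ell\in\{0,\dots,r-1\}$, and let $\mathrm{Ind}\in\{0,1\}^m$ with $\mathrm{Ind}(i)=1$ iff $c(i)=\ell$. Let $i^*=\min\{i\in[m]:c(i)=\ell\}$ (or $0$ if none). If $i^*=0$ then $\mathrm{SPiRiT}_p(\mathrm{Ind})=0^d$. If $i^*\ge 1$ and $p$ is $A$-correct for $A=\{(T\,\mathrm{Ind})(k):k\in\mathrm{Anc}(i^* )\}$, then $\mathrm{SPiRiT}_p(\mathrm{Ind})$ is the binary representation of $i^*-1$. Moreover, writing each entry of $c$ and $\ell$ by its $t$-bit binary representation, each coordinate of $\mathrm{SPiRiT}_p(\mathrm{Ind})$ is a polynomial over $\mathbb Z_p$ in these $(m+1)t$ bits of degree at most $2t(p-1)^2$.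
   Context: Let $m=2^d$. Consider the complete binary tree with nodes indexed $1,\dots,2m-1$: node $1$ is the root, node $k\in[m-1]$ has left child $2k$ and right child $2k+1$; leaf number $i\in[m]$ is node $m+i-1$. For $i\in[m]$ let $\mathrm{Anc}(i)=\{\lfloor (m+i-1)/2^h\rfloor: h=0,\dots,d\}$ and $\mathrm{Lop}(i)=\{k-1: k\in \mathrm{Anc}(i),\ k\text{ odd},\ k\ge 3\}$. Tree matrix $T\in\{0,1\}^{(2m-1)\times m}$: $T(k,i)=1$ iff $k\in\mathrm{Anc}(i)$. Roots matrix $R\in\{0,1\}^{m\times(2m-1)}$: for $j\in[m-1]$, $R(j,k)=1$ iff $k\in\mathrm{Lop}(j+1)$; row $m$ of $R$ is the indicator vector of $\{1\}$. Pairwise matrix $P\in\{-1,0,1\}^{m\times m}$: $(Pu)(1)=u(1)$ and $(Pu)(k)=u(k)-u(k-1)$ for $k\ge 2$. Sketch matrix $S\in\{0,1\}^{d\times m}$: $S(h,k)$ is the $h$-th bit (coefficient of $2^{h-1}$) of $k-1$. For a prime $p$ and an integer vector $y$, $i_p(y)$ is the vector with entries $y(k)^{p-1}\bmod p$, and $\mathrm{SPiRiT}_p(x)=\big(SP\cdot i_p\big((R\cdot i_p(Tx\bmod p))\bmod p\big)\big)\bmod p$. ''Binary representation of $n$'' means the vector whose $h$-th entry is the coefficient of $2^{h-1}$ in $n$. For a set $A$ of integers, $p$ is $A$-correct if for every $a\in A$: $a=0$ iff $a\equiv0\pmod p$. *)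

(* Defs.v *)
(* Vectors / matrices are 1-indexed functions nat -> int;
   products sum over the explicit index ranges given in the paper. *)
From mathcomp Require Import all_boot all_order all_algebra.
Unset Printing Implicit Defensive.
Import Order.TTheory GRing.Theory Num.Theory.
Local Open Scope ring_scope.

Definition anc (d i : nat) : seq nat :=
  [seq ((expn 2 d + i - 1) %/ expn 2 h)%N | h <- iota 0 d.+1].

Definition lop (d i : nat) : seq nat :=
  [seq k.-1 | k <- anc d i & odd k && (3 <= k)%N].

Definition Tmat (d : nat) (k i : nat) : int := (k \in anc d i)%:Z.

Definition Rmat (d : nat) (j k : nat) : int :=
  if (j < expn 2 d)%N then (k \in lop d j.+1)%:Z else (k == 1%N)%:Z.

Definition Pmat (k i : nat) : int :=
  (if i == k then 1 else if (2 <= k)%N && (i == k.-1) then -1 else 0)%R.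

(* h-th bit (coefficient of 2^(h-1)) of n, h >= 1 *)
Definition bitof (n h : nat) : int := (odd (n %/ expn 2 h.-1))%:Z.

Definition Smat (h k : nat) : int := bitof k.-1 h.

Definition mulv (n : nat) (A : nat -> nat -> int) (u : nat -> int) : nat -> int :=
  fun k => (\sum_(1 <= i < n.+1) A k i * u i)%R.

Definition modv (p : nat) (u : nat -> int) : nat -> int :=
  fun k => ((u k) %% (p%:Z))%Z.

Definition ip (p : nat) (y : nat -> int) : nat -> int :=
  fun k => (((y k) ^+ (p.-1))%R %% (p%:Z))%Z.

Definition spirit (d p : nat) (x : nat -> int) : nat -> int :=
  let m := (expn 2 d)%N in
  modv p (mulv m Smat (mulv m Pmat
    (ip p (modv p (mulv (2 * m)%N.-1 (Rmat d)
      (ip p (modv p (mulv m (Tmat d) x)))))))).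

Definition ind (c : nat -> nat) (l : nat) : nat -> int :=
  fun i => (c i == l)%:Z.

Definition istar (d : nat) (c : nat -> nat) (l : nat) : nat :=
  head 0%N [seq i <- iota 1 (expn 2 d) | c i == l].

Definition Acorrect (p : nat) (A : seq int) : Prop :=
  forall a, a \in A -> (a == 0%R) = ((a %% (p%:Z))%Z == 0%R).

(* Multivariate polynomials with integer coefficients (read mod p) over a
   finite set of variables V: a finite list of (coefficient, exponent vector). *)
Definition mpoly (V : finType) := seq (int * {ffun V -> nat}).

Definition mdeg_le {V : finType} (Q : mpoly V) (D : nat) : bool :=
  all (fun me : int * {ffun V -> nat} => (\sum_(v : V) me.2 v <= D)%N) Q.

Definition meval {V : finType} (Q : mpoly V) (x : V -> int) : int :=
  (\sum_(me <- Q) me.1 * \prod_(v : V) (x v) ^+ (me.2 v))%R.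

(* The (m+1)t input bits: variable (j, b) with j < m is bit b (coefficient
   of 2^b) of c(j+1); with j = m it is bit b of l. *)
Definition varT (d t : nat) : finType := ('I_(expn 2 d + 1) * 'I_t)%type.

Definition inbits (d t : nat) (c : nat -> nat) (l : nat) : varT d t -> int :=
  fun v => (odd ((if (v.1 < expn 2 d)%N then c (v.1).+1 else l) %/ expn 2 v.2))%:Z.

(* Main.v *)
Require Import Defs.
From mathcomp Require Import all_boot all_order all_algebra all_fingroup all_solvable zify.
Import Order.TTheory GRing.Theory Num.Theory.
Local Open Scope ring_scope.

Lemma fermatz (p : nat) (y : int) : prime p -> 0 <= y < p%:Z ->
  ((y ^+ p.-1) %% p%:Z)%Z = (y != 0)%:Z.
Proof.
move=> pp /andP[y0 yp].
have [n ny] : exists n : nat, y = n%:Z by case: y {yp} y0 => // n; exists n.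
subst y.
have np : (n < p)%N by [].
rewrite -natz -natrX natz modz_nat.
case: n {y0 yp} np => [|n] np.
  by rewrite exp0n ?mod0n //; have := prime_gt1 pp; case: p {pp np} => [|[|p]].
have cp : coprime n.+1 p.
  by rewrite coprime_sym prime_coprime //; apply/negP => /(dvdn_leq (ltn0Sn _)); rewrite leqNgt np.
have := Euler_exp_totient cp; rewrite totient_prime // => ->.
rewrite modn_small ?prime_gt1 // natz.
by [].
Qed.


Section Rep.
Context {V : finType} {A : Type} {P : A -> Prop} {emb : A -> V -> int} {p : nat}.

Definition rep (D : nat) (f : A -> int) :=
  exists Q : mpoly V, mdeg_le Q D /\
    forall a, P a -> ((f a) %% p%:Z)%Z = ((meval Q (emb a)) %% p%:Z)%Z.

Lemma rep_mono {D D' f} : (D <= D')%N -> rep D f -> rep D' f.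
Proof.
move=> le [Q [HQ HE]]; exists Q; split => //.
by apply/allP => me /(allP HQ) /leq_trans; apply.
Qed.

Lemma rep_ext {D f g} : rep D f -> (forall a, P a -> (f a %% p%:Z)%Z = (g a %% p%:Z)%Z) ->
  rep D g.
Proof. by move=> [Q [HQ HE]] fg; exists Q; split => // a Pa; rewrite -fg // HE. Qed.

Lemma rep_mod {D f} : rep D f -> rep D (fun a => (f a %% p%:Z)%Z).
Proof. by move=> H; apply: (rep_ext H) => a _; rewrite modz_mod. Qed.

Lemma rep_const c : rep 0 (fun _ => c).
Proof.
exists [:: (c, [ffun=> 0%N])]; split.
  by rewrite /mdeg_le /= big1 // => v; rewrite ffunE.
move=> a _; rewrite /meval big_cons big_nil addr0 /= big1 ?mulr1 // => v _.
by rewrite ffunE expr0.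
Qed.

Lemma rep_var v : rep 1 (fun a => emb a v).
Proof.
exists [:: (1, [ffun w => (w == v : nat)])]; split.
  by rewrite /mdeg_le /= (bigD1 v) //= big1 ?ffunE ?eqxx // => w /negbTE; rewrite ffunE => ->.
move=> a _; rewrite /meval big_cons big_nil addr0 /= mul1r (bigD1 v) //= ffunE eqxx expr1.
by rewrite big1 ?mulr1 // => w /negbTE; rewrite ffunE => ->; rewrite expr0.
Qed.

Lemma rep_add {D f g} : rep D f -> rep D g -> rep D (fun a => f a + g a).
Proof.
move=> [Q1 [H1 E1]] [Q2 [H2 E2]]; exists (Q1 ++ Q2); split.
  by rewrite /mdeg_le all_cat; apply/andP.
move=> a Pa; rewrite /meval big_cat /=.
by rewrite -modzDm E1 // E2 // modzDm.
Qed.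

Definition mmul (Q1 Q2 : mpoly V) : mpoly V :=
  [seq (a.1 * b.1, [ffun v => (a.2 v + b.2 v)%N]) | a : int * {ffun V -> nat} <- Q1, b : int * {ffun V -> nat} <- Q2].

Lemma meval_mul Q1 Q2 x : meval (mmul Q1 Q2) x = meval Q1 x * meval Q2 x.
Proof.
rewrite /meval /mmul big_allpairs_dep mulr_suml; apply: eq_bigr => a _.
rewrite mulr_sumr; apply: eq_bigr => b _ /=.
rewrite -!mulrA; congr (_ * _); rewrite mulrCA; congr (_ * _).
rewrite -big_split /=; apply: eq_bigr => v _; by rewrite ffunE exprD.
Qed.

Lemma rep_mul {D1 D2 f g} : rep D1 f -> rep D2 g -> rep (D1 + D2) (fun a => f a * g a).
Proof.
move=> [Q1 [H1 E1]] [Q2 [H2 E2]]; exists (mmul Q1 Q2); split.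
  apply/allP => me /allpairsP [[a b] [/= Ha Hb ->]] /=.
  under eq_bigr do rewrite ffunE.
  by rewrite big_split /= leq_add // ?(allP H1 a Ha) ?(allP H2 b Hb).
move=> a Pa; rewrite meval_mul.
by rewrite -modzMm E1 // E2 // modzMm.
Qed.

Lemma rep_pow {D} n {f} : rep D f -> rep (n * D) (fun a => f a ^+ n).
Proof.
move=> Hf; elim: n => [|n IH].
  by rewrite mul0n; apply: (rep_ext (rep_const 1)) => a _; rewrite expr0.
rewrite mulSn; by apply: (rep_ext (rep_mul Hf IH)) => a _; rewrite exprS.
Qed.

Lemma rep_sum (I : eqType) (s : seq I) D (F : I -> A -> int) :
  (forall i, i \in s -> rep D (F i)) -> rep D (fun a => \sum_(i <- s) F i a).
Proof.
elim: s => [|i s IH] H.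
  by apply: (rep_mono (leq0n D)); apply: (rep_ext (rep_const 0)) => a _; rewrite big_nil.
apply: (rep_ext (rep_add (H i (mem_head _ _)) (IH _))) => [j js|a _].
  by apply: H; rewrite inE js orbT.
by rewrite big_cons.
Qed.

Lemma rep_prod (I : eqType) (s : seq I) D (F : I -> A -> int) :
  (forall i, i \in s -> rep D (F i)) -> rep (size s * D) (fun a => \prod_(i <- s) F i a).
Proof.
elim: s => [|i s IH] H.
  by rewrite mul0n; apply: (rep_ext (rep_const 1)) => a _; rewrite big_nil.
rewrite /= mulSn; apply: (rep_ext (rep_mul (H i (mem_head _ _)) (IH _))) => [j js|a _].
  by apply: H; rewrite inE js orbT.
by rewrite big_cons.
Qed.
End Rep.


Lemma bits_eq t a b : (a < 2 ^ t)%N -> (b < 2 ^ t)%N ->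
  (forall k, (k < t)%N -> odd (a %/ 2 ^ k) = odd (b %/ 2 ^ k)) -> a = b.
Proof.
elim: t a b => [|t IH] a b ha hb H.
  by move: ha hb; rewrite expn0 !ltnS !leqn0 => /eqP -> /eqP ->.
have h0 := H 0%N isT; rewrite expn0 !divn1 in h0.
have e : a./2 = b./2.
  apply: IH.
  - by rewrite -divn2 ltn_divLR // -expnSr.
  - by rewrite -divn2 ltn_divLR // -expnSr.
  by move=> k kt; rewrite -!divn2 -!divnMA -expnS; apply: H.
by rewrite -(odd_double_half a) -(odd_double_half b) h0 e.
Qed.

Lemma factor_eq (u v : bool) :
  1 + (-1) * (((u%:Z) + (-1) * (v%:Z)) * ((u%:Z) + (-1) * (v%:Z))) = (u == v)%:Z.
Proof. by case: u; case: v. Qed.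

Section Layers.
Context {V : finType} {A : Type} {P : A -> Prop} {emb : A -> V -> int} {p : nat}.

Lemma rep_mulv n M (u : A -> nat -> int) D k :
  (forall i, (1 <= i <= n)%N -> @rep V A P emb p D (fun a => u a i)) ->
  @rep V A P emb p D (fun a => mulv n M (u a) k).
Proof.
move=> H; rewrite /mulv; apply: rep_sum => i; rewrite mem_index_iota ltnS => Hi.
exact: (rep_mul (rep_const _) (H i Hi)).
Qed.

Lemma rep_modv (u : A -> nat -> int) D k :
  @rep V A P emb p D (fun a => u a k) -> @rep V A P emb p D (fun a => modv p (u a) k).
Proof. exact: rep_mod. Qed.

Lemma rep_ip (u : A -> nat -> int) D k :
  @rep V A P emb p D (fun a => u a k) -> @rep V A P emb p (p.-1 * D) (fun a => ip p (u a) k).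
Proof. by move=> H; apply: rep_mod; apply: rep_pow. Qed.
End Layers.

Section Part2.
Variables (d r p : nat).
Let m := (2 ^ d)%N.
Let t := up_log 2 r.
Definition AT := ((nat -> nat) * nat)%type.
Definition Pv (a : AT) : Prop := (forall i, (1 <= i <= 2 ^ d)%N -> (a.1 i < r)%N) /\ (a.2 < r)%N.
Definition embv (a : AT) : varT d (up_log 2 r) -> int := inbits d (up_log 2 r) a.1 a.2.
Notation REP := (@rep (varT d (up_log 2 r)) AT Pv embv p).

Lemma rep_ind i : (2 <= r)%N -> (1 <= i <= 2 ^ d)%N ->
  REP (size (enum 'I_(up_log 2 r)) * 2) (fun a => ind a.1 a.2 i).
Proof.
move=> r2 Hi.
have Hj : (i.-1 < 2 ^ d + 1)%N by lia.
have Hl : (2 ^ d < 2 ^ d + 1)%N by lia.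
set oi := Ordinal Hj; set ol := Ordinal Hl.
apply: (rep_ext (@rep_prod _ _ _ _ _ _ (enum 'I_(up_log 2 r)) 2
  (fun k a => 1 + (-1) * ((embv a (oi, k) + (-1) * embv a (ol, k)) *
                                  (embv a (oi, k) + (-1) * embv a (ol, k)))) _)).
  move=> k _.
  have H1 := @rep_var _ AT Pv embv p (oi, k).
  have H2 := @rep_var _ AT Pv embv p (ol, k).
  have H3 := rep_add H1 (rep_mul (rep_const (-1)) H2).
  have H4 := rep_mul (rep_const (-1)) (rep_mul H3 H3).
  exact: (rep_add (rep_mono (isT : (0 <= 2)%N) (rep_const 1)) H4).
move=> [c l] [Hc Hl'] /=; congr (_ %% _)%Z.
have E1 k : embv (c, l) (oi, k) = (odd (c i %/ 2 ^ k))%:Z.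
  by rewrite /embv /inbits /= ifT ?prednK //; lia.
have E2 k : embv (c, l) (ol, k) = (odd (l %/ 2 ^ k))%:Z.
  by rewrite /embv /inbits /= ltnn.
under eq_bigr do rewrite E1 E2 factor_eq.
have tr : (r <= 2 ^ up_log 2 r)%N by apply: up_logP.
rewrite /ind; case: eqP => [->|ne].
  by rewrite big1 // => k _; rewrite eqxx.
have [k Hk] : exists k : 'I_(up_log 2 r), odd (c i %/ 2 ^ k) != odd (l %/ 2 ^ k).
  case: (pickP (fun k : 'I_(up_log 2 r) => odd (c i %/ 2 ^ k) != odd (l %/ 2 ^ k))) => [k Hk|Hall]; first by exists k.
  exfalso; apply: ne; apply: (@bits_eq (up_log 2 r)).
  - by apply: leq_trans (Hc i Hi) tr.
  - by apply: leq_trans Hl' tr.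
  by move=> k kt; have /negbFE/eqP := Hall (Ordinal kt).
by rewrite (bigD1_seq k) ?mem_enum ?enum_uniq //= (negbTE Hk) mul0r.
Qed.
End Part2.

Lemma part2 d r p h : (2 <= r)%N ->
     exists Q : mpoly (varT d (up_log 2 r)),
       mdeg_le Q (2 * up_log 2 r * expn p.-1 2)%N /\
       forall (c : nat -> nat) (l : nat),
         (forall i, (1 <= i <= expn 2 d)%N -> (c i < r)%N) -> (l < r)%N ->
         spirit d p (ind c l) h
           = ((meval Q (inbits d (up_log 2 r) c l)) %% (p%:Z))%Z.
Proof.
move=> r2.
have H : @rep (varT d (up_log 2 r)) AT (Pv d r) (embv d r) p
   (p.-1 * (p.-1 * (size (enum 'I_(up_log 2 r)) * 2)))
   (fun a => spirit d p (ind a.1 a.2) h).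
  rewrite /spirit.
  apply: rep_modv; apply: rep_mulv => k _; apply: rep_mulv => k' _.
  apply: rep_ip; apply: rep_modv; apply: rep_mulv => j _.
  apply: rep_ip; apply: rep_modv; apply: rep_mulv => i Hi.
  exact: rep_ind.
have [Q [HQ HE]] := H; exists Q; split.

  by apply/allP => me /(allP HQ) /leq_trans; apply; rewrite size_enum_ord; lia.
move=> c l Hc Hl.
have := HE (c, l) (conj Hc Hl); rewrite /= /embv /= => <-.
by rewrite /spirit /modv modz_mod.
Qed.


Lemma level {d h x} : (h <= d)%N -> (2 ^ d <= x < 2 ^ d.+1)%N ->
  (2 ^ (d - h) <= x %/ 2 ^ h < 2 ^ (d - h).+1)%N.
Proof.
move=> hd /andP[x1 x2]; rewrite leq_divRL ?expn_gt0 // ltn_divLR ?expn_gt0 //.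
by rewrite -!expnD subnK // addSn subnK // x1 x2.
Qed.

Lemma pow_interval {e1 e2 k} : (2 ^ e1 <= k < 2 ^ e1.+1)%N ->
  (2 ^ e2 <= k < 2 ^ e2.+1)%N -> e1 = e2.
Proof.
move=> /andP[a1 a2] /andP[b1 b2]; apply/eqP; rewrite eqn_leq.
have h1 : (e1 < e2.+1)%N by rewrite -(ltn_exp2l _ _ (isT : (1 < 2)%N)) (leq_ltn_trans a1 b2).
have h2 : (e2 < e1.+1)%N by rewrite -(ltn_exp2l _ _ (isT : (1 < 2)%N)) (leq_ltn_trans b1 a2).
by rewrite -ltnS h1 -ltnS h2.
Qed.

Lemma mem_anc d i k : k \in anc d i = has (fun h => k == (2 ^ d + i - 1) %/ 2 ^ h)%N (iota 0 d.+1).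
Proof.
rewrite /anc; apply/mapP/hasP => [[h hi ->]|[h hi /eqP ->]]; by exists h.
Qed.

Lemma mem_lop d j k : k \in lop d j =
  has (fun h => let a := ((2 ^ d + j - 1) %/ 2 ^ h)%N in odd a && (3 <= a)%N && (k == a.-1)) (iota 0 d.+1).
Proof.
rewrite /lop /anc; apply/mapP/hasP => [[a]|[h hi /andP[/andP [oa a3] /eqP ->]]].
  rewrite mem_filter => /andP[/andP[oa a3] /mapP[h hi ea]] ek; exists h => //.
  by rewrite -ea oa a3 ek eqxx.
by exists ((2 ^ d + j - 1) %/ 2 ^ h)%N => //; rewrite mem_filter oa a3; apply: (map_f (fun h0 => (2 ^ d + j - 1) %/ 2 ^ h0)%N).
Qed.

Lemma leaf_range {d i} : (1 <= i <= 2 ^ d)%N -> (2 ^ d <= 2 ^ d + i - 1 < 2 ^ d.+1)%N.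
Proof. rewrite expnS; lia. Qed.

Lemma anc_range d i k : (1 <= i <= 2 ^ d)%N -> k \in anc d i -> (1 <= k < (2 * 2 ^ d).-1.+1)%N.
Proof.
move=> Hi; rewrite mem_anc => /hasP[h]; rewrite mem_iota add0n ltnS => /andP[_ hd] /eqP ->.
have := level hd (leaf_range Hi); move=> /andP[l1 l2].
have := leq_div (2 ^ d + i - 1) (2 ^ h); have := expn_gt0 2 (d - h).
lia.
Qed.

Lemma root_anc d i : (1 <= i <= 2 ^ d)%N -> 1%N \in anc d i.
Proof.
move=> Hi; rewrite mem_anc; apply/hasP; exists d; first by rewrite mem_iota; lia.
have := level (leqnn d) (leaf_range Hi); rewrite subnn expn0 expn1.
lia.
Qed.

Lemma L1 d i j k : (1 <= i <= 2 ^ d)%N -> (1 <= j <= 2 ^ d)%N ->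
  k \in lop d j -> k \in anc d i -> (i < j)%N.
Proof.
move=> Hi Hj; rewrite mem_lop mem_anc => /hasP[h]; rewrite mem_iota add0n ltnS => /andP[_ hd].
move=> /andP[/andP[oa a3] /eqP ek] /hasP[g]; rewrite mem_iota add0n ltnS => /andP[_ gd] /eqP ek'.
set a := ((2 ^ d + j - 1) %/ 2 ^ h)%N in oa a3 ek.
have la := level hd (leaf_range Hj).
have lk := level gd (leaf_range Hi).
have e1 : (2 ^ (d - h) <= k < 2 ^ (d - h).+1)%N.
  rewrite ek; move: la; rewrite -/a => /andP[la1 la2].
  have ne : a != (2 ^ (d - h))%N.
    apply/negP => /eqP ea; move: oa; rewrite ea oddX orbF => /eqP dh.
    by move: a3; rewrite ea dh.
  lia.
rewrite -ek' in lk.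
have egh := pow_interval e1 lk.
have egh' : g = h by lia.
subst g.
have lt : ((2 ^ d + i - 1) %/ 2 ^ h < a)%N by rewrite -ek' ek; lia.
rewrite ltnNge; apply/negP => ji.
have := @leq_div2r (2 ^ h) (2 ^ d + j - 1) (2 ^ d + i - 1) ltac:(lia).
rewrite -/a; lia.
Qed.

Lemma L2 d i j : (1 <= i)%N -> (i < j)%N -> (j <= 2 ^ d)%N ->
  exists k, k \in lop d j /\ k \in anc d i.
Proof.
move=> i1 ij jm.
have d1 : (1 <= d)%N.
  case: d jm => // ; rewrite expn0; lia.
have Hi : (1 <= i <= 2 ^ d)%N by lia.
have Hj : (1 <= j <= 2 ^ d)%N by lia.
set Ni := (2 ^ d + i - 1)%N; set Nj := (2 ^ d + j - 1)%N.
have ex : exists h, (Ni %/ 2 ^ h.+1 == Nj %/ 2 ^ h.+1)%N.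
  exists d.-1; rewrite prednK //.
  have := level (leqnn d) (leaf_range Hi); have := level (leqnn d) (leaf_range Hj).
  rewrite subnn expn0 expn1 -/Ni -/Nj; lia.
case: (ex_minnP ex) => h Hh Hmin.
have hd : (h <= d.-1)%N.
  apply: Hmin; rewrite prednK //.
  have := level (leqnn d) (leaf_range Hi); have := level (leqnn d) (leaf_range Hj).
  rewrite subnn expn0 expn1 -/Ni -/Nj; lia.
have ab : (Nj %/ 2 ^ h)%N != (Ni %/ 2 ^ h)%N.
  case: h Hh Hmin hd => [|h'] Hh Hmin hd.
    rewrite expn0 !divn1 /Ni /Nj; lia.
  apply/negP => /eqP eab.
  have := Hmin h'; rewrite eab eqxx => /(_ isT); lia.
set a := (Nj %/ 2 ^ h)%N in ab *; set b := (Ni %/ 2 ^ h)%N in ab *.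
have a2 : (a %/ 2 = b %/ 2)%N.
  by move/eqP: Hh; rewrite expnSr !divnMA.
have ba : (b <= a)%N by apply: leq_div2r; rewrite /Ni /Nj; clear -ij; lia.
have am : (a %% 2 = 1)%N by move: ab; rewrite neq_ltn; clear -a2 ba; lia.
have eb : b = a.-1 by move: ab; rewrite neq_ltn; clear -a2 ba; lia.
have oa : odd a by have := modn2 a; rewrite am; case: (odd a).
have la := level (leq_trans hd (leq_pred d)) (leaf_range Hj).
have two : (2 ^ 1 <= 2 ^ (d - h))%N by apply: leq_pexp2l => //; clear -hd d1; lia.
have a3 : (3 <= a)%N.
  move: la; rewrite -/Nj -/a expn1 in two *; move=> /andP[la _].
  have : a != 2 by apply/negP => /eqP e; rewrite e in oa.
  move: (2 ^ (d - h))%N two la => X two la.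
  clear -two la; lia.
exists b; split.
  rewrite mem_lop; apply/hasP; exists h; first by rewrite mem_iota; clear -hd d1; lia.
  by rewrite /= -/Nj -/a oa a3 eb eqxx.
rewrite mem_anc; apply/hasP; exists h; first by rewrite mem_iota; clear -hd d1; lia.
by [].
Qed.


Lemma head_filter_iota (P : pred nat) s n : (1 <= s)%N ->
  (head 0%N [seq i <- iota s n | P i] = 0%N /\ forall i, (s <= i < s + n)%N -> ~~ P i) \/
  (let j := head 0%N [seq i <- iota s n | P i] in
     (s <= j < s + n)%N /\ P j /\ forall i, (s <= i < j)%N -> ~~ P i).
Proof.
elim: n s => [|n IH] s s1.
  by left; split => // i; rewrite addn0; lia.
rewrite /= ; case Ps: (P s).
  right => /=; split; first lia.
  by split => // i; lia.
have [[h0 Hall]|[Hr1 [Hr2 Hr3]]] := IH s.+1 (leqW s1).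
  left; split => // i Hi.
  case: (eqVneq i s) => [->|ne]; first by rewrite Ps.
  by apply: Hall; lia.
right; split; first lia.
split => // i Hi.
case: (eqVneq i s) => [->|ne]; first by rewrite Ps.
by apply: Hr3; lia.
Qed.

Lemma sum_count (T : Type) (s : seq T) (B : pred T) :
  \sum_(i <- s) ((B i)%:Z) = (count B s)%:Z.
Proof.
elim: s => [|x s IH]; first by rewrite big_nil.
by rewrite big_cons IH /= PoszD.
Qed.

Lemma mulb_int (a b : bool) : (a%:Z * b%:Z) = (a && b)%:Z.
Proof. by case: a; case: b. Qed.

Lemma sum_delta (s : seq nat) (F : nat -> int) i : uniq s -> i \in s ->
  \sum_(k <- s) (F k * (k == i)%:Z) = F i.
Proof.
move=> us si; rewrite (bigD1_seq i) //= eqxx mulr1 big1 ?addr0 // => k /negbTE ->.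
by rewrite mulr0.
Qed.

Lemma sum_delta' (s : seq nat) (F : nat -> int) i : uniq s -> i \in s ->
  \sum_(k <- s) ((k == i)%:Z * F k) = F i.
Proof.
move=> us si; rewrite -(@sum_delta s F i us si); apply: eq_bigr => k _; exact: mulrC.
Qed.

Lemma count_le_size (s t : seq nat) (B : pred nat) : uniq s ->
  (count (fun k => (k \in t) && B k) s <= size t)%N.
Proof.
move=> us; rewrite -size_filter; apply: uniq_leq_size; first exact: filter_uniq.
by move=> k; rewrite mem_filter => /andP[/andP[]].
Qed.

Lemma size_lop d j : (1 <= j <= 2 ^ d)%N -> (size (lop d j) <= d)%N.
Proof.
move=> Hj; rewrite /lop /anc size_map (_ : iota 0 d.+1 = iota 0 d ++ [:: d]); last by rewrite -addn1 iotaD.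
rewrite map_cat filter_cat size_cat /=.
have -> : ((2 ^ d + j - 1) %/ 2 ^ d = 1)%N.
  have := level (leqnn d) (leaf_range Hj); rewrite subnn expn0 expn1.
  clear; lia.
rewrite /= addn0 size_filter; apply: leq_trans (count_size _ _) _.
by rewrite size_map size_iota.
Qed.


Lemma ip_eq p (u : nat -> int) k : prime p ->
  ip p (modv p u) k = ((u k %% p%:Z)%Z != 0)%:Z.
Proof.
move=> pp; rewrite /ip /modv fermatz //.
have p0 : (p%:Z != 0) by rewrite eqz_nat; have := prime_gt0 pp; case: (p).
by rewrite modz_ge0 // ltz_pmod // ltz_nat prime_gt0.
Qed.

Lemma part1 d p c l : (1 <= d)%N -> prime p -> (d < p)%N ->
     (istar d c l = 0%N ->
        forall h, (1 <= h <= d)%N -> spirit d p (ind c l) h = 0) /\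
     ((1 <= istar d c l)%N ->
        Acorrect p [seq mulv (expn 2 d) (Tmat d) (ind c l) k | k <- anc d (istar d c l)] ->
        forall h, (1 <= h <= d)%N ->
          spirit d p (ind c l) h = bitof (istar d c l).-1 h).
Proof.
move=> d1 pp dp.
have p1 := prime_gt1 pp.
set TX := mulv (2 ^ d) (Tmat d) (ind c l).
set Z := ip p (modv p TX).
set W := mulv (2 * 2 ^ d).-1 (Rmat d) Z.
set U := ip p (modv p W).
set Vv := mulv (2 ^ d) Pmat U.
have sp : forall h, spirit d p (ind c l) h = modv p (mulv (2 ^ d) Smat Vv) h by [].
have F_TX k : TX k = (count (fun i => (k \in anc d i) && (c i == l)) (index_iota 1 (2 ^ d).+1))%:Z.
  by rewrite /TX /mulv -sum_count; apply: eq_bigr => i _; rewrite /Tmat /ind mulb_int.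
have F_Z k : Z k = ((TX k %% p%:Z)%Z != 0)%:Z by rewrite /Z ip_eq.
have F_U j : U j = ((W j %% p%:Z)%Z != 0)%:Z by rewrite /U ip_eq.
have F_Wr j : (j < 2 ^ d)%N -> W j =
    (count (fun k => (k \in lop d j.+1) && ((TX k %% p%:Z)%Z != 0)) (index_iota 1 (2 * 2 ^ d).-1.+1))%:Z.
  move=> jm; rewrite /W /mulv -sum_count; apply: eq_bigr => k _.
  by rewrite /Rmat jm F_Z mulb_int.
have F_Wm : W (2 ^ d)%N = Z 1%N.
  rewrite /W /mulv /Rmat ltnn sum_delta' ?iota_uniq // mem_index_iota.
  have := expn_gt0 2 d; clear; lia.
have F_V k : (1 <= k <= 2 ^ d)%N -> Vv k = U k - (2 <= k)%N%:Z * U k.-1.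
  move=> Hk; rewrite /Vv /mulv.
  have uq := iota_uniq 1 (2 ^ d).+1.-1.
  transitivity (\sum_(1 <= i < (2 ^ d).+1) ((i == k)%:Z * U i - ((2 <= k)%N && (i == k.-1))%:Z * U i)).
    apply: eq_bigr => i _; rewrite /Pmat.
    case: (eqVneq i k) => [->|ne].
      have -> : (k == k.-1) = false by apply/negbTE; clear -Hk; lia.
      by rewrite andbF mul1r mul0r subr0.
    by case: ifP => _ /=; rewrite ?mul0r ?mul1r ?subr0 ?sub0r ?mulN1r.
  have kr0 : k \in index_iota 1 (2 ^ d).+1 by rewrite mem_index_iota; clear -Hk; lia.
  rewrite sumrB (@sum_delta' _ U _ (iota_uniq _ _) kr0).
  case: (leqP 2 k) => k2.
    have kr : k.-1 \in index_iota 1 (2 ^ d).+1 by rewrite mem_index_iota; clear -Hk k2; lia.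
    by rewrite (@sum_delta' _ U _ (iota_uniq _ _) kr) mul1r.
  by rewrite /= big1 ?mul0r ?subr0 // => i _; rewrite mul0r.
split.
  move=> i0 h Hh.
  have [[_ Hall]|[Hr _]] := head_filter_iota (fun i => c i == l) 1 (2 ^ d) isT; last first.
    by move: Hr; rewrite -/(istar d c l) i0.
  have TX0 k : TX k = 0.
    rewrite F_TX; apply/eqP; rewrite eqz_nat -leqn0 leqNgt -has_count; apply/hasPn => i.
    rewrite mem_index_iota => Hi; rewrite (negbTE (Hall i _)) ?andbF //; clear -Hi; lia.
  have Z0 k : Z k = 0 by rewrite F_Z TX0 mod0z.
  have W0 j : W j = 0 by rewrite /W /mulv big1 // => k _; rewrite Z0 mulr0.
  have U0 j : U j = 0 by rewrite F_U W0 mod0z.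
  have V0 k : Vv k = 0 by rewrite /Vv /mulv big1 // => i _; rewrite U0 mulr0.
  by rewrite sp /modv /mulv big1 ?mod0z // => k _; rewrite V0 mulr0.
move=> i1 Hac h Hh.
set st := istar d c l in i1 Hac *.
have [[i0 _]|[Hr1 [Hr2 Hr3]]] := head_filter_iota (fun i => c i == l) 1 (2 ^ d) isT.
  by move: i1; rewrite /st /istar i0.
rewrite -/(istar d c l) -/st in Hr1 Hr2 Hr3.
have Hst : (1 <= st <= 2 ^ d)%N by clear -Hr1; lia.
have TXnz k : k \in anc d st -> (TX k %% p%:Z)%Z != 0.
  move=> ka.
  have := Hac (TX k) (map_f _ ka) => <-.
  rewrite F_TX eqz_nat -lt0n -has_count; apply/hasP; exists st.
    by rewrite mem_index_iota; clear -Hst; lia.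
  by rewrite ka.
have Uj j : (1 <= j <= 2 ^ d)%N -> U j = (st <= j)%N%:Z.
  move=> Hj; rewrite F_U.
  case: (ltnP j (2 ^ d)) => jm.
    rewrite F_Wr //.
    case: (ltnP j st) => js.
      have -> : count (fun k => (k \in lop d j.+1) && ((TX k %% p%:Z)%Z != 0))
                  (index_iota 1 (2 * 2 ^ d).-1.+1) = 0%N.
        apply/eqP; rewrite -leqn0 leqNgt -has_count; apply/hasPn => k _.
        apply/negP => /andP[kl]; rewrite F_TX.
        have -> : count (fun i => (k \in anc d i) && (c i == l)) (index_iota 1 (2 ^ d).+1) = 0%N.
          apply/eqP; rewrite -leqn0 leqNgt -has_count; apply/hasPn => i.
          rewrite mem_index_iota => Hi; apply/negP => /andP[ka ci].
          have ij := @L1 d i j.+1 k ltac:(clear -Hi; lia) ltac:(clear -Hj jm; lia) kl ka.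
          have := Hr3 i ltac:(clear -Hi ij js; lia); by rewrite ci.
        by rewrite mod0z eqxx.
      by rewrite mod0z eqxx.
    have [k0 [kl ka]] := @L2 d st j.+1 ltac:(clear -Hst; lia)
         ltac:(clear -js; lia) ltac:(clear -jm; lia).
    set C := count _ _.
    have C1 : (0 < C)%N.
      rewrite -has_count; apply/hasP; exists k0; last by rewrite kl TXnz.
      by rewrite mem_index_iota; apply: anc_range ka.
    have C2 : (C <= d)%N.
      apply: leq_trans (@count_le_size _ (lop d j.+1) _ (iota_uniq _ _)) (@size_lop d j.+1 _).
      clear -Hj jm; lia.
    rewrite modz_small; last by apply/andP; split; rewrite ?lez_nat ?ltz_nat //; clear -C2 dp; lia.
    by rewrite eqz_nat -lt0n C1.
  have -> : j = (2 ^ d)%N by clear -Hj jm; lia.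
  rewrite F_Wm F_Z TXnz ?root_anc //= modz_small //.
  by move: Hst => /andP[_ ->].
have Vk k : (1 <= k <= 2 ^ d)%N -> Vv k = (k == st)%:Z.
  move=> Hk; rewrite F_V // Uj //.
  case: (leqP 2 k) => k2.
    rewrite Uj; last by clear -Hk k2; lia.
    rewrite mul1r.
    case: (ltngtP st k) => sk.
    - have -> : (st <= k.-1)%N = true by clear -sk k2; lia.
      by rewrite subrr.
    - have -> : (st <= k.-1)%N = false by clear -sk k2; lia.
      by [].
    - by rewrite (_ : (st <= k.-1)%N = false) ?subr0 //; clear -k2 sk; lia.
  have -> : k = 1%N by clear -Hk k2; lia.
  rewrite mul0r subr0.
  have [->|ne] := eqVneq st 1%N; first by [].
  have -> : (st <= 1)%N = false by clear -ne Hst; lia.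
  by [].
rewrite sp /modv /mulv.
rewrite (eq_big_nat _ _ (F2 := fun k => Smat h k * (k == st)%:Z)); last first.
  by move=> k Hk; rewrite Vk //; clear -Hk; lia.
have kst : st \in index_iota 1 (2 ^ d).+1 by rewrite mem_index_iota; clear -Hst; lia.
rewrite (@sum_delta _ _ _ (iota_uniq _ _) kst).
rewrite /Smat /bitof modz_small //.
apply/andP; split => //; rewrite ltz_nat; case: odd => //; clear -p1; lia.
Qed.


Theorem lemma3 (d r p : nat) :
  (1 <= d)%N -> (2 <= r)%N -> prime p -> (d < p)%N ->
  (forall (c : nat -> nat) (l : nat),
     (forall i, (1 <= i <= expn 2 d)%N -> (c i < r)%N) -> (l < r)%N ->
     (istar d c l = 0%N ->
        forall h, (1 <= h <= d)%N -> spirit d p (ind c l) h = 0) /\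
     ((1 <= istar d c l)%N ->
        Acorrect p [seq mulv (expn 2 d) (Tmat d) (ind c l) k | k <- anc d (istar d c l)] ->
        forall h, (1 <= h <= d)%N ->
          spirit d p (ind c l) h = bitof (istar d c l).-1 h)) /\
  (forall h, (1 <= h <= d)%N ->
     exists Q : mpoly (varT d (up_log 2 r)),
       mdeg_le Q (2 * up_log 2 r * expn p.-1 2)%N /\
       forall (c : nat -> nat) (l : nat),
         (forall i, (1 <= i <= expn 2 d)%N -> (c i < r)%N) -> (l < r)%N ->
         spirit d p (ind c l) h
           = ((meval Q (inbits d (up_log 2 r) c l)) %% (p%:Z))%Z).
Proof.
move=> d1 r2 pp dp; split.
  move=> c l _ _; exact: part1.
move=> h _; exact: part2.
Qed.
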